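(* Assume the setting described in the context. If $E$ is a closed unbounded subset of $\lambda$, then there are stationarily many $\delta\in S$ for which $E\cap C_\delta\notin I_\delta$.
   Context: Setting: $\mu$ is a singular cardinal with $\mathrm{cf}(\mu)=\aleph_0$, $\lambda=\mu^+$, $\sigma$ is regular with $\aleph_0<\sigma<\mu$, $S$ is a stationary subset of $\{\delta<\lambda:\mathrm{cf}(\delta)=\sigma\}$, and $\langle\mu_i:i<\omega\rangle$ is a strictly increasing sequence of regular cardinals cofinal in $\mu$ with $\sigma<\mu_0$. For $\delta\in S$, $c^0_\delta$ is the increasing enumeration of a club subset of $\delta$ of order type $\sigma$, and for every club $E\subseteq\lambda$ the set of $\delta\in S$ with $\mathrm{ran}(c^0_\delta)\subseteq E$ is stationary. $I(\delta,\epsilon,m)=(c^0_\delta(\omega\cdot\epsilon+m),c^0_\delta(\omega\cdot\epsilon+m+1)]$ for $\epsilon<\sigma$, $m<\omega$. $\langle C_\delta:\delta\in S\rangle$ satisfies: $C_\delta$ club in $\delta$; $\mathrm{ran}(c^0_\delta)\subseteq C_\delta$; $|C_\delta\cap I(\delta,\epsilon,m)|\leq\mu_m^+$; every $\alpha\in\mathrm{nacc}(C_\delta)\cap I(\delta,\epsilon,m)$ has $\mathrm{cf}(\alpha)>\mu_m^+$; for every club $E\subseteq\lambda$ there are stationarily many $\delta\in S$ with $E\cap\mathrm{nacc}(C_\delta)\cap I(\delta,\epsilon,m)\neq\emptyset$ for all $\epsilon<\sigma$, $m<\omega$. ($\mathrm{acc}(C)=\{\alpha<\delta:\alpha=\sup(\alpha\cap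 C)\}$, $\mathrm{nacc}(C)=C\setminus\mathrm{acc}(C)$.) For $\delta\in S$, $I_\delta$ is the ideal on $C_\delta$ generated by the sets $\{\gamma\in C_\delta:\gamma\in\mathrm{acc}(C_\delta)\text{ or }\mathrm{cf}(\gamma)<\alpha\text{ or }\gamma<\beta\}$ for $\alpha<\mu$, $\beta<\delta$. *)

(* Defs.v *)
Set Implicit Arguments.
(* Ordinals below lambda = mu^+ are modelled by an abstract
   type T with a strict well-order lt. *)
From Stdlib Require Import List.

Section OrdinalNotions.
Variables (T : Type) (lt : T -> T -> Prop).

Definition le (x y : T) : Prop := lt x y \/ x = y.

Definition well_order : Prop :=
  (forall x, ~ lt x x) /\
  (forall x y z, lt x y -> lt y z -> lt x z) /\
  (forall x y, lt x y \/ x = y \/ lt y x) /\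
  well_founded lt.

Definition seg (a : T) : T -> Prop := fun x => lt x a.

Definition inj_into (A B : T -> Prop) : Prop :=
  exists f : T -> T, (forall x, A x -> B (f x)) /\
                     (forall x y, A x -> A y -> f x = f y -> x = y).

Definition is_cardinal (k : T) : Prop :=
  forall b, lt b k -> ~ inj_into (seg k) (seg b).

Definition cof_le (g k : T) : Prop :=
  exists f : T -> T, (forall x, lt x k -> lt (f x) g) /\
                     (forall y, lt y g -> exists x, lt x k /\ le y (f x)).

Definition cf_is (g k : T) : Prop :=
  cof_le g k /\ forall k', lt k' k -> ~ cof_le g k'.

Definition regular_cardinal (k : T) : Prop := is_cardinal k /\ cf_is k k.

Definition succ_cardinal (nu k : T) : Prop :=
  is_cardinal k /\ lt nu k /\
  forall k', is_cardinal k' -> lt nu k' -> le k k'.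

Definition uncountable (A : T -> Prop) : Prop :=
  ~ exists f : T -> nat, forall x y, A x -> A y -> f x = f y -> x = y.

Definition is_limit (x : T) : Prop :=
  (exists y, lt y x) /\ forall y, lt y x -> exists z, lt y z /\ lt z x.

(* the whole of T (= lambda) has order type mu^+ *)
Definition is_succ_of_card (mu : T) : Prop :=
  is_cardinal mu /\ (forall a, inj_into (seg a) (seg mu)) /\
  ~ inj_into (fun _ => True) (seg mu).

Definition club (E : T -> Prop) : Prop :=
  (forall a, exists b, E b /\ le a b) /\
  (forall g, is_limit g ->
     (forall a, lt a g -> exists b, E b /\ lt a b /\ lt b g) -> E g).

Definition stationary (S : T -> Prop) : Prop :=
  forall E, club E -> exists x, S x /\ E x.

Definition club_in (d : T) (C : T -> Prop) : Prop :=
  (forall x, C x -> lt x d) /\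
  (forall a, lt a d -> exists b, C b /\ le a b) /\
  (forall g, lt g d -> is_limit g ->
     (forall a, lt a g -> exists b, C b /\ lt a b /\ lt b g) -> C g).

Definition acc (d : T) (C : T -> Prop) (a : T) : Prop :=
  lt a d /\ forall x, lt x a -> exists b, C b /\ lt x b /\ lt b a.

Definition nacc (d : T) (C : T -> Prop) (a : T) : Prop :=
  C a /\ ~ acc d C a.

Variables (sigma : T) (c0 : T -> T -> nat -> T).
(* c0 d e m  stands for  c^0_d(omega*e + m)  (e < sigma) *)

Definition ran_c0 (d x : T) : Prop :=
  exists e m, lt e sigma /\ x = c0 d e m.

Definition Iint (d e : T) (m : nat) (x : T) : Prop :=
  lt (c0 d e m) x /\ le x (c0 d e (S m)).

Variables (mu : T) (C : T -> T -> Prop).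

Definition ideal_gen (d a b x : T) : Prop :=
  C d x /\ (acc d (C d) x \/ (exists k, cf_is x k /\ lt k a) \/ lt x b).

(* X belongs to the ideal on C_d generated by the sets ideal_gen d a b,
   a < mu, b < d *)
Definition in_ideal (d : T) (X : T -> Prop) : Prop :=
  (forall x, X x -> C d x) /\
  exists l : list (T * T),
    Forall (fun p => lt (fst p) mu /\ lt (snd p) d) l /\
    forall x, X x -> Exists (fun p => ideal_gen d (fst p) (snd p) x) l.

End OrdinalNotions.

(* Main.v *)
Require Import Defs.
From Stdlib Require Import List.

From Stdlib Require Import Classical Lia Arith PeanoNat.

Lemma mono_le (T : Type) (lt : T -> T -> Prop) (f : nat -> T) :
  (forall i j, i < j -> lt (f i) (f j)) -> forall i j, i <= j -> le lt (f i) (f j).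
Proof.
  intros H i j Hij. destruct (Nat.eq_dec i j) as [->|Hn]; [right; reflexivity|].
  left; apply H; lia.
Qed.

Section Aux.
Variables (T : Type) (lt : T -> T -> Prop) (Hwo : well_order lt).
Lemma lt_tr x y z : lt x y -> lt y z -> lt x z.
Proof. destruct Hwo as [_ [H _]]; eauto. Qed.
Lemma le_lt_tr x y z : le lt x y -> lt y z -> lt x z.
Proof. intros [H| ->] H2; [eapply lt_tr; eauto|auto]. Qed.
Lemma lt_le_tr x y z : lt x y -> le lt y z -> lt x z.
Proof. intros H [H2| <-]; [eapply lt_tr; eauto|auto]. Qed.
Lemma lt_irr x : ~ lt x x.
Proof. destruct Hwo as [H _]; auto. Qed.
Lemma cf_uniq g k k' : cf_is lt g k -> cf_is lt g k' -> k = k'.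
Proof.
  intros [H1 H2] [H3 H4]. destruct Hwo as [_ [_ [Htr _]]].
  destruct (Htr k k') as [H|[H|H]]; auto.
  - exfalso; exact (H4 k H H1).
  - exfalso; exact (H2 k' H H3).
Qed.
End Aux.

Theorem proposition5p3
  (T : Type) (lt : T -> T -> Prop) (Hwo : well_order lt)
  (mu sigma : T) (mus mups : nat -> T)
  (Stat : T -> Prop) (c0 : T -> T -> nat -> T) (C : T -> T -> Prop)
  (* lambda = T = mu^+ *)
  (Hlam : is_succ_of_card lt mu)
  (* mu_i strictly increasing regular cardinals cofinal in mu, sigma < mu_0 *)
  (Hmus_lt : forall i, lt (mus i) mu)
  (Hmus_inc : forall i j, i < j -> lt (mus i) (mus j))
  (Hmus_reg : forall i, regular_cardinal lt (mus i))
  (Hmus_cof : forall a, lt a mu -> exists i, lt a (mus i))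
  (Hmups : forall i, succ_cardinal lt (mus i) (mups i))
  (* sigma regular, aleph_0 < sigma < mu_0 *)
  (Hsig_reg : regular_cardinal lt sigma)
  (Hsig_unc : uncountable (seg lt sigma))
  (Hsig_mu0 : lt sigma (mus 0))
  (* S stationary, consisting of ordinals of cofinality sigma *)
  (HS_cf : forall d, Stat d -> cf_is lt d sigma)
  (HS_stat : stationary lt Stat)
  (* c^0_d: increasing enumeration (indexed by omega*e+m, e<sigma) of a club of d *)
  (Hc0_lt : forall d e m, Stat d -> lt e sigma -> lt (c0 d e m) d)
  (Hc0_inc : forall d e e' m m', Stat d -> lt e sigma -> lt e' sigma ->
               (lt e e' \/ (e = e' /\ m < m')) -> lt (c0 d e m) (c0 d e' m'))
  (Hc0_club : forall d, Stat d -> club_in lt d (ran_c0 lt sigma c0 d))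
  (Hc0_guess : forall E, club lt E ->
      stationary lt (fun d => Stat d /\ forall x, ran_c0 lt sigma c0 d x -> E x))
  (* the sequence C_d *)
  (HC_club : forall d, Stat d -> club_in lt d (C d))
  (HC_c0 : forall d x, Stat d -> ran_c0 lt sigma c0 d x -> C d x)
  (HC_card : forall d e m, Stat d -> lt e sigma ->
      inj_into (fun x => C d x /\ Iint lt c0 d e m x) (seg lt (mups m)))
  (HC_cf : forall d e m x, Stat d -> lt e sigma ->
      nacc lt d (C d) x -> Iint lt c0 d e m x ->
      exists k, cf_is lt x k /\ lt (mups m) k)
  (HC_guess : forall E, club lt E ->
      stationary lt (fun d => Stat d /\ forall e m, lt e sigma ->
         exists x, E x /\ nacc lt d (C d) x /\ Iint lt c0 d e m x))
  (E : T -> Prop) (HE : club lt E) :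
  stationary lt (fun d => Stat d /\ ~ in_ideal lt mu C d (fun x => E x /\ C d x)).
Proof.
  assert (Hsig_ne : exists e, lt e sigma).
  { destruct (classic (exists e, lt e sigma)) as [H|H]; auto.
    exfalso; apply Hsig_unc. exists (fun _ => 0). intros x y Hx. exfalso; apply H; eauto. }
  intros D HD.
  destruct (HC_guess E HE D HD) as [d [[Sd Hg] Dd]].
  exists d. split; [split; auto|auto].
  intros [_ [l [Hl Hcov]]].
  assert (Hbound : exists e M, lt e sigma /\ forall p, In p l ->
            lt (snd p) (c0 d e M) /\ lt (fst p) (mus M)).
  { clear Hcov. induction l as [|[a b] l IH].
    - destruct Hsig_ne as [e He]. exists e, 0. split; auto. intros p [].
    - inversion Hl as [|? ? [Ha Hb] Hl']; subst.
      destruct (IH Hl') as [e [M [He HM]]].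
      destruct (Hmus_cof a Ha) as [j Hj].
      destruct (Hc0_club d Sd) as [_ [Hcl _]].
      destruct (Hcl b Hb) as [y [[e' [m' [He' ->]]] Hby]].
      assert (Hc0m : forall ee i i', lt ee sigma -> i <= i' -> le lt (c0 d ee i) (c0 d ee i')).
      { intros ee i i' Hee. apply (@mono_le T lt (c0 d ee)). intros; apply Hc0_inc; auto. }
      assert (Hmm : forall i i', i <= i' -> le lt (mus i) (mus i')).
      { apply (@mono_le T lt mus); auto. }
      assert (Hstep : forall e2 M2, lt e2 sigma -> M <= M2 -> j <= M2 ->
                lt b (c0 d e2 M2) -> (le lt e e2) ->
                exists e M, lt e sigma /\ forall p, In p ((a,b)::l) ->
                lt (snd p) (c0 d e M) /\ lt (fst p) (mus M)).
      { intros e2 M2 He2 HM2 Hj2 Hb2 Hee. exists e2, M2. split; auto.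
        intros p [<-|Hp]; simpl.
        - split; auto. eapply lt_le_tr; eauto.
        - destruct (HM p Hp) as [H1 H2]. split.
          + eapply (@lt_le_tr T lt Hwo); [exact H1|].
            destruct Hee as [Hee| <-].
            * left; apply Hc0_inc; auto.
            * apply Hc0m; auto.
          + eapply lt_le_tr; eauto. }
      pose proof Hwo as [_ [_ [Htr _]]].
      assert (Hb1 : forall M2, m' < M2 -> lt b (c0 d e' M2)).
      { intros M2 HM2. eapply (@le_lt_tr T lt Hwo); [exact Hby|]. apply Hc0_inc; auto. }
      destruct (Htr e e') as [H|[<-|H]].
      + apply (Hstep e' (M + S m' + j)); auto; try lia. apply Hb1; lia. left; auto.
      + apply (Hstep e (M + S m' + j)); auto; try lia. apply Hb1; lia. right; auto.
      + apply (Hstep e (M + j)); auto; try lia.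
        eapply (@le_lt_tr T lt Hwo); [exact Hby|]. apply Hc0_inc; auto. right; auto. }
  destruct Hbound as [e [M [He HM]]].
  destruct (Hg e M He) as [x [Ex [Nx Ix]]].
  assert (Cx : C d x) by (destruct Nx; auto).
  specialize (Hcov x (conj Ex Cx)).
  destruct (HC_cf d e M x Sd He Nx Ix) as [k [Hk Hkm]].
  apply Exists_exists in Hcov. destruct Hcov as [p [Hin Hp]].
  destruct (HM p Hin) as [Hb Ha].
  destruct Hp as [_ [Hacc|[[k' [Hk' Hk'a]]|Hxb]]].
  - destruct Nx as [_ Nx]; auto.
  - rewrite <- (@cf_uniq T lt Hwo _ _ _ Hk Hk') in Hk'a.
    destruct (Hmups M) as [_ [Hmm _]].
    apply (@lt_irr T lt Hwo k).
    eapply (@lt_tr T lt Hwo); [exact Hk'a|].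
    eapply (@lt_tr T lt Hwo); [exact Ha|].
    eapply (@lt_tr T lt Hwo); [exact Hmm|exact Hkm].
  - destruct Ix as [Ix _].
    apply (@lt_irr T lt Hwo x).
    eapply (@lt_tr T lt Hwo); [exact Hxb|].
    eapply (@lt_tr T lt Hwo); [exact Hb|exact Ix].
Qed.
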